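(* For all integers $1\le k\le n$, the probability (under $\mathbb{P}_n$) that the $k$-th boundary step of a type-B permutation tableau of size $n$ is a west step and the diagonal cell of the column corresponding to this step contains a $1$ equals $\dfrac12$.
   Context: A Ferrers diagram is a left-justified array of cells whose row lengths weakly decrease from top to bottom (rows of length $0$ are allowed). Its half-perimeter is the number of rows plus the number of columns. Its southeast boundary, traversed from the northeast corner to the southwest corner, consists of $n$ unit steps, each south or west; south steps correspond to rows and west steps to columns. If the diagram has $c$ columns, the shifted Ferrers diagram is obtained by inserting $c$ new left-justified rows above it, of lengths $c,c-1,\dots,1$ from top to bottom; the rightmost cell of each inserted row is a diagonal cell, and each column contains exactly one diagonal cell. A type-B permutation tableau of size $n$ is a filling of a shifted Ferrers diagram of half-perimeter $n$ with $0$'s and $1$'s such that: (1) every column contains at least one $1$; (2) no $0$ has both a $1$ above it in its column and a $1$ to its left in its row; (3) if a diagonal cell contains $0$ then every cell of its row contains $0$. Let $\mathcal{B}_n$ be the set of such tableaux and $\mathbb{P}_n$ the uniform probability measure on $\mathcal{B}_n$. *)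

(* Defs.v *)
From mathcomp Require Import all_boot all_order all_algebra.
Set Implicit Arguments. Unset Strict Implicit. Unset Printing Implicit Defensive.

(* Boundary steps are indexed by 'I_n (0-based,
   step number i+1 in the paper), traversed from the NE corner to the SW corner.
   w i = true  : step i is a West step (a column);
   w i = false : step i is a South step (a row of the Ferrers diagram).

   Rows of the shifted diagram are indexed by steps as well:
   - a South step i indexes the original row of that step;
   - a West step d indexes the inserted row whose rightmost (diagonal) cell
     lies in the column of step d.
   Columns are indexed by West steps j.
   The diagonal cell of column j is (j, j). *)

Definition word n := {ffun 'I_n -> bool}.
Definition filling n := {ffun 'I_n * 'I_n -> bool}.

Definition in_diag n (w : word n) (r j : 'I_n) : bool := w j && (r <= j).

Definition row_above n (w : word n) (r r' : 'I_n) : bool :=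
  (w r && ~~ w r') || (w r && w r' && (r' < r)) || (~~ w r && ~~ w r' && (r < r')).

(* In a given row, the cell in column j' is to the left of the cell in column j
   iff j' > j (columns further along the boundary path are further west). *)

Definition typeB_tableau n (t : word n * filling n) : bool :=
  let w := t.1 in let F := t.2 in
  [&&
      [forall r : 'I_n, forall j : 'I_n, ~~ in_diag w r j ==> ~~ F (r, j)],
      [forall j : 'I_n, w j ==> [exists r : 'I_n, in_diag w r j && F (r, j)]],
      (* (2) no 0 with a 1 above it in its column and a 1 to its left in its row *)
      [forall r : 'I_n, forall j : 'I_n,
         (in_diag w r j && ~~ F (r, j)) ==>
         ~~ ([exists r' : 'I_n, [&& in_diag w r' j, row_above w r' r & F (r', j)]]
             && [exists j' : 'I_n, [&& in_diag w r j', j < j' & F (r, j')]])]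
    &
      [forall j : 'I_n, (w j && ~~ F (j, j)) ==>
         [forall j' : 'I_n, in_diag w j j' ==> ~~ F (j, j')]]].

Definition B_set n : {set word n * filling n} := [set t | typeB_tableau t].

Definition west_diag1 n (k : 'I_n) : {set word n * filling n} :=
  [set t in B_set n | t.1 k && t.2 (k, k)].

Definition probB n (E : {set word n * filling n}) : rat :=
  (#|E :&: B_set n|%:R / #|B_set n|%:R)%R.

(* Main.v *)
Require Import Defs.
From mathcomp Require Import all_boot all_order all_algebra.
From mathcomp Require Import zify.
Set Implicit Arguments. Unset Strict Implicit. Unset Printing Implicit Defensive.

Section Ext.
Variable n : nat.
Notation lm := (lift (@ord_max n)).

Definition res (t : word n.+1 * filling n.+1) : word n * filling n :=
  ([ffun j => t.1 (lm j)], [ffun p => t.2 (lm p.1, lm p.2)]).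

Definition data (t : word n.+1 * filling n.+1) : bool * bool * {set 'I_n} :=
  (t.1 ord_max, t.2 (ord_max, ord_max), [set r | t.2 (lm r, ord_max)]).

Definition extw (T : word n * filling n) (b : bool) : word n.+1 :=
  [ffun i => if unlift ord_max i is Some j then T.1 j else b].
Definition extf (T : word n * filling n) (b d : bool) (C : {set 'I_n}) : filling n.+1 :=
  [ffun p => match unlift ord_max p.1, unlift ord_max p.2 with
     | Some r, Some j => T.2 (r, j)
     | Some r, None => b && (r \in C)
     | None, None => b && d
     | None, Some _ => false end].
Definition ext (T : word n * filling n) (e : bool * bool * {set 'I_n}) :=
  (extw T e.1.1, extf T e.1.1 e.1.2 e.2).

Variables (T : word n * filling n) (b d : bool) (C : {set 'I_n}).
Local Notation W := (extw T b).
Local Notation G := (extf T b d C).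

Lemma Wl (j : 'I_n) : W (lm j) = T.1 j. Proof. by rewrite /extw ffunE liftK. Qed.
Lemma Wm : W ord_max = b. Proof. by rewrite /extw ffunE unlift_none. Qed.
Lemma Gll (r : 'I_n) (j : 'I_n) : G (lm r, lm j) = T.2 (r, j). Proof. by rewrite /extf ffunE /= !liftK. Qed.
Lemma Glm (r : 'I_n) : G (lm r, ord_max) = b && (r \in C). Proof. by rewrite /extf ffunE /= liftK unlift_none. Qed.
Lemma Gml (j : 'I_n) : G (ord_max, lm j) = false. Proof. by rewrite /extf ffunE /= liftK unlift_none. Qed.
Lemma Gmm : G (ord_max, ord_max) = b && d. Proof. by rewrite /extf ffunE /= unlift_none. Qed.

Lemma lmv (j : 'I_n) : (lm j : nat) = j. Proof. exact: lift_max. Qed.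

Lemma Dll (r : 'I_n) (j : 'I_n) : in_diag W (lm r) (lm j) = in_diag T.1 r j.
Proof. by rewrite /in_diag Wl !lmv. Qed.
Lemma Dlm (r : 'I_n) : in_diag W (lm r) ord_max = b.
Proof. by rewrite /in_diag Wm lmv /= ltnW ?andbT. Qed.
Lemma Dml (j : 'I_n) : in_diag W ord_max (lm j) = false.
Proof. by rewrite /in_diag Wl lmv /= leqNgt ltn_ord andbF. Qed.
Lemma Dmm : in_diag W ord_max ord_max = b.
Proof. by rewrite /in_diag Wm leqnn andbT. Qed.

Lemma Rll (r : 'I_n) (r' : 'I_n) : row_above W (lm r) (lm r') = row_above T.1 r r'.
Proof. by rewrite /row_above !Wl !lmv. Qed.
Lemma Rml (r : 'I_n) : row_above W ord_max (lm r) = b.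
Proof. rewrite /row_above Wm Wl lmv /= ltn_ord ltnNge (ltnW (ltn_ord r)). by case: b; case: (T.1 r). Qed.
Lemma Rlm (r : 'I_n) : row_above W (lm r) ord_max = ~~ b.
Proof. rewrite /row_above Wm Wl lmv /= ltn_ord ltnNge (ltnW (ltn_ord r)).
  by case: b; case: (T.1 r). Qed.
Lemma Rmm : row_above W ord_max ord_max = false.
Proof. by rewrite /row_above ltnn; case: (W ord_max). Qed.

End Ext.

Lemma forall_liftE n (P : pred 'I_n.+1) :
  [forall i, P i] = [forall j : 'I_n, P (lift ord_max j)] && P ord_max.
Proof.
apply/forallP/andP => [H|[/forallP H1 H2] i]; first by split => //; apply/forallP.
by case: (unliftP ord_max i) => [j|] ->.
Qed.
Lemma exists_liftE n (P : pred 'I_n.+1) :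
  [exists i, P i] = [exists j : 'I_n, P (lift ord_max j)] || P ord_max.
Proof.
apply/existsP/orP => [[i]|[/existsP[j Hj]|H]].
- by case: (unliftP ord_max i) => [j|] -> H; [left; apply/existsP; exists j|right].
- by exists (lift ord_max j).
- by exists ord_max.
Qed.

Definition c0 n (t : word n * filling n) :=
  [forall r : 'I_n, forall j : 'I_n, ~~ in_diag t.1 r j ==> ~~ t.2 (r, j)].
Definition c1 n (t : word n * filling n) :=
  [forall j : 'I_n, t.1 j ==> [exists r : 'I_n, in_diag t.1 r j && t.2 (r, j)]].
Definition c2 n (t : word n * filling n) :=
  [forall r : 'I_n, forall j : 'I_n,
         (in_diag t.1 r j && ~~ t.2 (r, j)) ==>
         ~~ ([exists r' : 'I_n, [&& in_diag t.1 r' j, row_above t.1 r' r & t.2 (r', j)]]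
             && [exists j' : 'I_n, [&& in_diag t.1 r j', j < j' & t.2 (r, j')]])].
Definition c3 n (t : word n * filling n) :=
  [forall j : 'I_n, (t.1 j && ~~ t.2 (j, j)) ==>
         [forall j' : 'I_n, in_diag t.1 j j' ==> ~~ t.2 (j, j')]].
Lemma typeBE n (t : word n * filling n) : typeB_tableau t = [&& c0 t, c1 t, c2 t & c3 t].
Proof. by []. Qed.

Definition c2row n (t : word n * filling n) (r : 'I_n) :=
  [forall j : 'I_n, (in_diag t.1 r j && ~~ t.2 (r, j)) ==>
     ~~ [exists r' : 'I_n, [&& in_diag t.1 r' j, row_above t.1 r' r & t.2 (r', j)]]].
Definition freeb n (t : word n * filling n) (r : 'I_n) :=
  (t.1 r ==> t.2 (r, r)) && c2row t r.

Lemma forallb_and (T : finType) (P Q : pred T) :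
  [forall x, P x && Q x] = [forall x, P x] && [forall x, Q x].
Proof.
apply/forallP/andP => [H|[/forallP H1 /forallP H2] x]; last by rewrite H1 H2.
by split; apply/forallP => x; case/andP: (H x).
Qed.
Lemma forallb_true (T : finType) : [forall x : T, true] = true.
Proof. by apply/forallP. Qed.

Lemma implyb_and x y z : (x ==> y && z) = (x ==> y) && (x ==> z).
Proof. by case: x. Qed.

Definition exA n (t : word n * filling n) (r j : 'I_n) :=
  [exists r' : 'I_n, [&& in_diag t.1 r' j, row_above t.1 r' r & t.2 (r', j)]].
Definition exL n (t : word n * filling n) (r j : 'I_n) :=
  [exists j' : 'I_n, [&& in_diag t.1 r j', j < j' & t.2 (r, j')]].
Definition q2 n (t : word n * filling n) (r j : 'I_n) :=
  (in_diag t.1 r j && ~~ t.2 (r, j)) ==> ~~ (exA t r j && exL t r j).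
Lemma c2E n (t : word n * filling n) : c2 t = [forall r, forall j, q2 t r j].
Proof. by []. Qed.
Lemma c2rowE n (t : word n * filling n) r :
  c2row t r = [forall j, (in_diag t.1 r j && ~~ t.2 (r, j)) ==> ~~ exA t r j].
Proof. by []. Qed.

Section ExtProps.
Variable n : nat.
Notation lm := (lift (@ord_max n)).
Variables (T : word n * filling n) (b d : bool) (C : {set 'I_n}).
Notation E := (ext T (b, d, C)).

Lemma c0_ext : c0 E = c0 T.
Proof.
rewrite /c0 /= forall_liftE.
under eq_forallb => r do [rewrite forall_liftE; under eq_forallb => j do rewrite Dll Gll; rewrite Dlm Glm].
rewrite forall_liftE Dmm Gmm.
under [X in _ && (X && _)]eq_forallb => j do rewrite Dml Gml.
rewrite forallb_true /= forallb_and.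
by case: b => /=; rewrite forallb_true ?andbT.
Qed.
Lemma c1_ext : c1 E = c1 T && (b ==> (d || [exists r, r \in C])).
Proof.
rewrite /c1 /= forall_liftE.
under eq_forallb => j do [rewrite Wl exists_liftE; under eq_existsb => r do rewrite Dll Gll; rewrite Dml Gml].
rewrite Wm exists_liftE Dmm Gmm.
under eq_existsb => r do rewrite Dlm Glm.
under eq_forallb => j do rewrite andbF orbF.
by case: b => //=; rewrite orbC.
Qed.
Lemma c3_ext : c3 E = c3 T && [forall j, (b && (j \in C)) ==> (T.1 j ==> T.2 (j, j))].
Proof.
rewrite /c3 /= forall_liftE.
under eq_forallb => j do [rewrite Wl Gll forall_liftE; under eq_forallb => j' do rewrite Dll Gll; rewrite Dlm Glm].
rewrite Wm Gmm forall_liftE Dmm Gmm.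
have H (P : pred 'I_n) : [forall j : 'I_n, in_diag (extw T b) ord_max (lm j) ==> P j] = true.
  by apply/forallP => j; rewrite Dml.
rewrite H /=.
have -> : b && ~~ (b && d) ==> (b ==> ~~ (b && d)) by case: b; case: d.
rewrite andbT.
under eq_forallb => j do rewrite implyb_and.
rewrite forallb_and; congr (_ && _); apply: eq_forallb => j.
by case: b; case: (T.1 j); case: (T.2 (j, j)); case: (j \in C).
Qed.
Lemma Lll (j j' : 'I_n) : (lm j < lm j') = (j < j'). Proof. by rewrite !lmv. Qed.
Lemma Llm (j : 'I_n) : (lm j < @ord_max n) = true. Proof. by rewrite lmv /= ltn_ord. Qed.
Lemma Lml (j : 'I_n) : (@ord_max n < lm j) = false. Proof. by rewrite lmv /= ltnNge ltnW. Qed.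

Lemma exA_ll r j : exA E (lm r) (lm j) = exA T r j.
Proof.
rewrite /exA /= exists_liftE Dml /= orbF.
by apply: eq_existsb => r'; rewrite Dll Rll Gll.
Qed.
Lemma exL_ll r j : exL E (lm r) (lm j) = exL T r j || (b && (r \in C)).
Proof.
rewrite /exL /= exists_liftE Dlm Llm Glm /=; congr (_ || _); last by case: b.
by apply: eq_existsb => j'; rewrite Dll Lll Gll.
Qed.
Lemma exL_lm r : exL E (lm r) ord_max = false.
Proof.
rewrite /exL /= exists_liftE ltnn andbF orbF.
by apply/existsP => -[j']; rewrite Lml andbF.
Qed.
Lemma exL_m : exL E ord_max ord_max = false.
Proof.
rewrite /exL /= exists_liftE ltnn andbF orbF.
by apply/existsP => -[j']; rewrite Dml.
Qed.

Lemma q2_ll r j : q2 E (lm r) (lm j) =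
  (in_diag T.1 r j && ~~ T.2 (r, j)) ==> ~~ (exA T r j && (exL T r j || (b && (r \in C)))).
Proof. by rewrite /q2 Dll Gll exA_ll exL_ll. Qed.
Lemma q2_lm r : q2 E (lm r) ord_max = true.
Proof. by rewrite /q2 exL_lm andbF implybT. Qed.
Lemma q2_ml j : q2 E ord_max (lm j) = true.
Proof. by rewrite /q2 Dml. Qed.
Lemma q2_mm : q2 E ord_max ord_max = true.
Proof. by rewrite /q2 exL_m andbF implybT. Qed.

Lemma c2_ext : c2 E = c2 T && [forall r, (b && (r \in C)) ==> c2row T r].
Proof.
rewrite !c2E forall_liftE forall_liftE q2_mm andbT.
under [X in _ && X]eq_forallb => j do rewrite q2_ml.
rewrite forallb_true andbT.
under [X in X = _]eq_forallb => r do [rewrite forall_liftE q2_lm andbT; under eq_forallb => j do rewrite q2_ll].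
rewrite -forallb_and; apply: eq_forallb => r; rewrite c2rowE.
case: b => /=; last by under eq_forallb => j do rewrite orbF; rewrite andbT.
case: (r \in C) => /=; last by under eq_forallb => j do rewrite orbF; rewrite andbT.
under eq_forallb => j do rewrite orbT andbT.
rewrite -forallb_and; apply: eq_forallb => j.
by rewrite /q2; case: (_ && _) => //=; case: (exA T r j); case: (exL T r j).
Qed.
Lemma typeB_ext : typeB_tableau E =
  [&& typeB_tableau T, b ==> (d || [exists r, r \in C]) &
      [forall r, (b && (r \in C)) ==> freeb T r]].
Proof.
rewrite !typeBE c0_ext c1_ext c2_ext c3_ext.
have -> : [forall r, (b && (r \in C)) ==> freeb T r] =
   [forall r, (b && (r \in C)) ==> c2row T r] && [forall j, (b && (j \in C)) ==> (T.1 j ==> T.2 (j, j))].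
  rewrite -forallb_and; apply: eq_forallb => r.
  by rewrite /freeb; case: (_ && _) => //=; rewrite andbC.
by case: (c0 T); case: (c1 T); case: (c2 T); case: (c3 T); case: (b ==> _); case: [forall r, _ ==> c2row T r]; case: [forall j, _ ==> (_ ==> _)].
Qed.

Lemma exA_lm r : exA E (lm r) ord_max = b && ([exists r', row_above T.1 r' r && (r' \in C)] || d).
Proof.
rewrite /exA /= exists_liftE Dmm Rml Gmm.
under eq_existsb => r' do rewrite Dlm Rll Glm.
by case: b => /=; [rewrite ?orbF | rewrite orbF; apply/existsP => -[]].
Qed.
Lemma exA_mm : exA E ord_max ord_max = false.
Proof.
rewrite /exA /= exists_liftE Rmm andbF orbF.
by apply/existsP => -[r']; rewrite Rlm Dlm; case: b.
Qed.

Lemma freeb_extl r : freeb E (lm r) =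
  freeb T r && ((b && (r \notin C)) ==> ~~ ([exists r', row_above T.1 r' r && (r' \in C)] || d)).
Proof.
rewrite /freeb Wl Gll [c2row E _]c2rowE forall_liftE exA_lm Dlm Glm.
rewrite /=; under [X in _ && (X && _) = _]eq_forallb => j do rewrite Dll Gll exA_ll.
rewrite -c2rowE.
by case: b => //=; rewrite ?andbT //; case: (r \in C); rewrite /= ?andbT ?andbA.
Qed.
Lemma freeb_extm : freeb E ord_max = (b ==> d).
Proof.
rewrite /freeb Wm Gmm c2rowE forall_liftE exA_mm Dmm Gmm.
under eq_forallb => j do rewrite Dml.
by rewrite forallb_true; case: b; case: d.
Qed.
End ExtProps.

Definition ok n (T : word n * filling n) (e : bool * bool * {set 'I_n}) :=
  if e.1.1 then (e.1.2 || [exists r, r \in e.2]) && [forall r, (r \in e.2) ==> freeb T r]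
  else ~~ e.1.2 && (e.2 == set0).

Section Fiber.
Variable n : nat.
Notation lm := (lift (@ord_max n)).

Lemma res_ext (T : word n * filling n) (e : bool * bool * {set 'I_n}) : res (ext T e) = T.
Proof.
case: T => w F; case: e => [[b d] C]; rewrite /res /ext /=; congr pair; apply/ffunP => x; rewrite ffunE.
  exact: Wl.
by case: x => r j; rewrite (Gll (w, F)).
Qed.

Lemma data_ext (T : word n * filling n) b d (C : {set 'I_n}) : data (ext T (b, d, C)) = (b, b && d, if b then C else set0).
Proof.
rewrite /data /ext /= Wm Gmm; congr pair; apply/setP => r; rewrite inE Glm.
by case: b; rewrite ?inE.
Qed.

Lemma ext_res (t : word n.+1 * filling n.+1) : c0 t -> ext (res t) (data t) = t.
Proof.
case: t => w F /= Hc0; rewrite /ext /=; congr pair; apply/ffunP => x; rewrite ffunE.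
  by case: (unliftP ord_max x) => [j|] ->; rewrite ?liftK ?unlift_none ?ffunE.
case: x => r j /=.
have Hs : forall r j, ~~ in_diag w r j -> F (r, j) = false.
  by move=> r0 j0 H; apply/negbTE; move/forallP: Hc0 => /(_ r0)/forallP/(_ j0)/implyP; apply.
case: (unliftP ord_max r) => [r0|] ->; case: (unliftP ord_max j) => [j0|] ->;
  rewrite ?liftK ?unlift_none ?ffunE ?inE //=.
- by case: (boolP (w ord_max)) => // Hw; rewrite Hs // /in_diag (negbTE Hw).
- by rewrite Hs // /in_diag lmv /= leqNgt ltn_ord andbF.
- by case: (boolP (w ord_max)) => // Hw; rewrite Hs // /in_diag (negbTE Hw).
Qed.

Lemma ok_ext (T : word n * filling n) (e : bool * bool * {set 'I_n}) : typeB_tableau T -> ok T e ->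
   typeB_tableau (ext T e) && ((res (ext T e), data (ext T e)) == (T, e)).
Proof.
case: e => [[b d] C] HT; rewrite /ok /= res_ext data_ext typeB_ext HT /=.
case: b => /=.
  by case/andP => -> ->; rewrite eqxx.
by case/andP => /negbTE -> /eqP ->; rewrite forallb_true eqxx.
Qed.

Lemma ext_ok (T : word n * filling n) (e : bool * bool * {set 'I_n}) : typeB_tableau (ext T e) && ((res (ext T e), data (ext T e)) == (T, e)) ->
   typeB_tableau T && ok T e.
Proof.
case: e => [[b d] C]; rewrite res_ext data_ext typeB_ext /ok /=.
case/andP => /and3P [HT H1 H2] /eqP [] Hd HC; rewrite HT /=.
case: b Hd HC H1 H2 => /=.
  by move=> _ _ -> /forallP H2; apply/forallP => r; apply: H2.
by move=> <- <-; rewrite eqxx.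
Qed.

Lemma fiber_sum (F : word n.+1 * filling n.+1 -> nat) :
  \sum_(t in B_set n.+1) F t = \sum_(T in B_set n) \sum_(e | ok T e) F (ext T e).
Proof.
rewrite pair_big_dep.
rewrite (reindex_onto (fun p : (word n * filling n) * (bool * bool * {set 'I_n}) => ext p.1 p.2)
                      (fun t => (res t, data t))) /=; last first.
  by move=> t; rewrite inE typeBE => /and4P [H _ _ _]; apply: ext_res.
apply: eq_bigl => -[T e] /=; rewrite !inE.
apply/idP/idP => [/ext_ok //|/andP [H1 H2]].
exact: ok_ext.
Qed.
End Fiber.

Section Comb.
Variable Xt : finType.
Variable rk : Xt -> nat.
Hypothesis rk_inj : injective rk.

Definition hh (A C : {set Xt}) :=
  #|[set r in A | (r \in C) || ~~ [exists r', (rk r' < rk r) && (r' \in C)]]|.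

Lemma split_subsets (F : {set Xt} -> nat) (a0 : Xt) (A : {set Xt}) : a0 \in A ->
  \sum_(C : {set Xt} | C \subset A) F C =
  \sum_(C : {set Xt} | C \subset A :\ a0) F C + \sum_(C : {set Xt} | C \subset A :\ a0) F (a0 |: C).
Proof.
move=> Ha0.
rewrite (bigID (fun C : {set Xt} => a0 \in C)) addnC; congr (_ + _); last first.
  by apply: eq_bigl => C; rewrite subsetD1.
rewrite (reindex_onto (fun C => a0 |: C) (fun C => C :\ a0)); last first.
  by move=> C /andP [_ H]; rewrite setD1K.
apply: eq_bigl => C; rewrite setU11 andbT subUset sub1set Ha0 /=.
rewrite subsetD1; congr (_ && _).
apply/eqP/idP => [<-|H]; first by rewrite !inE eqxx.
apply/setP => x; rewrite !inE; case: (eqVneq x a0) => // ->; by rewrite (negbTE H).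
Qed.

Lemma key_comb m : forall (A : {set Xt}) (g : nat -> nat), #|A| = m ->
  g (#|A|.+1) + \sum_(C : {set Xt} | (C \subset A) && (C != set0)) g (hh A C) =
  \sum_(C : {set Xt} | C \subset A) g (#|C|.+1).
Proof.
elim: m => [|m IH] A g HA.
  move/cards0_eq: (HA) => ->; rewrite cards0.
  rewrite big_pred0; last by move=> C; rewrite subset0 andbN.
  rewrite (big_pred1 set0); last by move=> C; rewrite subset0.
  by rewrite cards0 addn0.
have [x0 Hx0] : exists x0, x0 \in A by apply/set0Pn; rewrite -card_gt0 HA.
pose a0 := [arg min_(a < x0 in A) rk a].
have Ha0 : a0 \in A by rewrite /a0; case: arg_minnP.
have Hmin : forall r, r \in A -> r != a0 -> rk a0 < rk r.
  move=> r Hr; rewrite /a0; case: arg_minnP => // a Ha Hle Hne.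
  rewrite ltn_neqAle Hle // andbT; apply/eqP => /rk_inj E.
  by move: Hne; rewrite -E eqxx.
set A' := A :\ a0.
have HA' : #|A'| = m by move: HA; rewrite (cardsD1 a0) Ha0 => -[].
have Ha0' : a0 \notin A' by rewrite !inE eqxx.
rewrite big_mkcondr (split_subsets _ Ha0) (split_subsets _ Ha0).
under [X in _ + (_ + X) = _]eq_bigr => C HC.
  rewrite (_ : (a0 |: C != set0) = true); last by apply/set0Pn; exists a0; rewrite setU11.
  rewrite (_ : hh A (a0 |: C) = #|C|.+1); last first.
    rewrite /hh (_ : [set r in A | _] = a0 |: C).
      by rewrite cardsU1 (contra (subsetP HC a0) Ha0') add1n.
    apply/setP => r; rewrite !inE.
    case: (eqVneq r a0) => [->|Hne] /=; first by rewrite Ha0.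
    case: (boolP (r \in C)) => HrC /=.
      by have := subsetP HC r HrC; rewrite !inE => /andP [_ ->].
    case: (boolP (r \in A)) => //= HrA.
    by apply: negbF; apply/existsP; exists a0; rewrite (Hmin r HrA Hne) !inE eqxx.
  over.
have hhS : forall C : {set Xt}, C \subset A' -> hh A C = (hh A' C).+1.
  move=> C HC; rewrite /hh (_ : [set r in A | _] = a0 |: [set r in A' | (r \in C) || ~~ [exists r', (rk r' < rk r) && (r' \in C)]]).
    by rewrite cardsU1 inE (negbTE Ha0') add1n.
  apply/setP => r; rewrite !inE.
  case: (eqVneq r a0) => [->|Hne] /=; last by [].
  rewrite Ha0 (negbTE (contra (subsetP HC a0) Ha0')) /=; apply/negP => /existsP [r' /andP [Hlt Hr']].
  have := subsetP HC r' Hr'; rewrite !inE => /andP [Hne' HA'r'].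
  by have := Hmin r' HA'r' Hne'; rewrite ltnNge (ltnW Hlt).
under [X in _ + (X + _) = _]eq_bigr => C HC do rewrite hhS //.
under [X in _ = _ + X]eq_bigr => C HC do rewrite cardsU1 (contra (subsetP HC a0) Ha0') add1n.
rewrite -big_mkcondr addnA.
have := IH A' (fun x => g x.+1) HA'; rewrite /= => <-.
by rewrite HA HA' addnC.
Qed.
End Comb.

Definition rank n (w : word n) (r : 'I_n) : nat := if w r then n - r else n + r + 1.

Lemma row_above_rank n (w : word n) a b : row_above w a b = (rank w a < rank w b).
Proof.
rewrite /row_above /rank; have := ltn_ord a; have := ltn_ord b.
case: (w a); case: (w b) => /= Hb Ha; apply/idP/idP; lia.
Qed.

Lemma rank_inj n (w : word n) : injective (rank w).
Proof.
move=> a b; rewrite /rank; have := ltn_ord a; have := ltn_ord b.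
case: (w a); case: (w b) => /= Hb Ha E; apply: val_inj => /=; lia.
Qed.

Definition freeset n (t : word n * filling n) := [set r | freeb t r].
Definition fstat n (t : word n * filling n) := #|freeset t|.

Lemma card_lift n (P : pred 'I_n.+1) :
  #|[set i | P i]| = #|[set j : 'I_n | P (lift ord_max j)]| + P ord_max.
Proof.
rewrite !cardsE -!sum1_card !big_mkcond /= big_ord_recr /=; congr (_ + _).
  rewrite [RHS]big_mkcond; apply: eq_bigr => j _.
  rewrite (_ : widen_ord _ j = lift ord_max j) //.
  by apply: val_inj; rewrite /= /bump leqNgt ltn_ord.
Qed.

Lemma subset_freeE n (T : word n * filling n) (C : {set 'I_n}) :
  [forall r, (r \in C) ==> freeb T r] = (C \subset freeset T).
Proof.
apply/forallP/subsetP => [H r Hr|H r]; first by rewrite inE; exact: (implyP (H r)).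
by apply/implyP => /H; rewrite inE.
Qed.

Section FStat.
Variable n : nat.
Variable T : word n * filling n.

Lemma fstat_ff : fstat (ext T (false, false, set0)) = (fstat T).+1.
Proof.
rewrite /fstat /freeset card_lift freeb_extm addn1; congr (_.+1).
by apply: eq_card => r; rewrite !inE freeb_extl andbT.
Qed.

Lemma fstat_tt (C : {set 'I_n}) : C \subset freeset T -> fstat (ext T (true, true, C)) = #|C|.+1.
Proof.
move=> HC; rewrite /fstat /freeset card_lift freeb_extm addn1; congr (_.+1).
apply: eq_card => r; rewrite !inE freeb_extl orbT /=.
case: (boolP (r \in C)) => Hr; last by rewrite andbF.
by have := subsetP HC r Hr; rewrite inE => ->.
Qed.

Lemma fstat_tf (C : {set 'I_n}) : fstat (ext T (true, false, C)) =
  hh (rank T.1) (freeset T) C.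
Proof.
rewrite /fstat /freeset card_lift freeb_extm addn0 /hh.
apply: eq_card => r; rewrite !inE freeb_extl orbF /=.
congr (_ && _); case: (r \in C) => //=.
congr (~~ _); apply: eq_existsb => r'; by rewrite row_above_rank.
Qed.
End FStat.

Lemma sum_triple n (G : bool * bool * {set 'I_n} -> nat) :
  \sum_(e : bool * bool * {set 'I_n}) G e =
  \sum_(b : bool) \sum_(d : bool) \sum_(C : {set 'I_n}) G (b, d, C).
Proof.
rewrite (eq_bigr (fun b => \sum_(p : bool * {set 'I_n}) G (b, p.1, p.2))); last first.
  by move=> b _; rewrite pair_bigA.
rewrite pair_bigA /=.
rewrite (reindex (fun e : bool * bool * {set 'I_n} => (e.1.1, (e.1.2, e.2)))) /=; last first.
  exists (fun p : bool * (bool * {set 'I_n}) => (p.1, p.2.1, p.2.2)) => [[[b d] C]|[b [d C]]] //.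
by apply: eq_bigr => -[[b d] C].
Qed.

Lemma sum_ext_decomp n (T : word n * filling n) (F : bool * bool * {set 'I_n} -> nat) :
  \sum_(e | ok T e) F e =
  F (false, false, set0) + \sum_(C : {set 'I_n} | C \subset freeset T) F (true, true, C)
  + \sum_(C : {set 'I_n} | (C \subset freeset T) && (C != set0)) F (true, false, C).
Proof.
rewrite big_mkcond sum_triple !big_bool /= big1_eq add0n.
have -> : \sum_(C : {set 'I_n}) (if ok T (false, false, C) then F (false, false, C) else 0)
          = F (false, false, set0).
  rewrite (bigD1 set0) //= {1}/ok /= eqxx big1 ?addn0 //.
  by move=> C HC; rewrite /ok /= (negbTE HC).
rewrite addnC addnA; congr (_ + _ + _).
- by rewrite [RHS]big_mkcond; apply: eq_bigr => C _; rewrite /ok /= subset_freeE.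
- rewrite [RHS]big_mkcond; apply: eq_bigr => C _; rewrite /ok /= subset_freeE andbC.
  by rewrite (_ : [exists r, r \in C] = (C != set0)) //; apply/existsP/set0Pn.
Qed.

Lemma fiber_val n (T : word n * filling n) (g : nat -> nat) :
  \sum_(e | ok T e) g (fstat (ext T e)) =
  2 * \sum_(C : {set 'I_n} | C \subset freeset T) g (#|C|.+1).
Proof.
rewrite sum_ext_decomp fstat_ff.
under eq_bigr => C HC do rewrite fstat_tt //.
under [X in _ + X = _]eq_bigr => C HC do rewrite fstat_tf.
have := @key_comb _ _ (@rank_inj n T.1) _ (freeset T) g (erefl _).
rewrite /fstat -addnA (addnC (\sum_(C | _) _)) addnA => ->.
by rewrite mul2n addnn.
Qed.

Lemma fiber_val1 n (T : word n * filling n) (g : nat -> nat) :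
  \sum_(e | ok T e) (e.1.1 && e.1.2) * g (fstat (ext T e)) =
  \sum_(C : {set 'I_n} | C \subset freeset T) g (#|C|.+1).
Proof.
rewrite sum_ext_decomp /= mul0n add0n [X in _ + X]big1 ?addn0; last by move=> *; rewrite mul0n.
by apply: eq_bigr => C HC; rewrite mul1n fstat_tt.
Qed.

Lemma sum_subsets_card (Xt : finType) (A : {set Xt}) (F : nat -> nat) :
  \sum_(C : {set Xt} | C \subset A) F #|C| = \sum_(i < #|A|.+1) 'C(#|A|, i) * F i.
Proof.
rewrite (partition_big (fun C : {set Xt} => (inord #|C| : 'I_#|A|.+1)) xpredT) //=.
apply: eq_bigr => i _.
rewrite (eq_bigl (fun C : {set Xt} => (C \subset A) && (#|C| == i))); last first.
  move=> C /=; case: (boolP (C \subset A)) => //= HC.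
  have Hle : #|C| <= #|A| by apply: subset_leq_card.
  apply/eqP/eqP => [<-|E]; first by rewrite inordK.
  by apply: val_inj; rewrite /= inordK // E.
rewrite (eq_bigr (fun _ => F i)); last by move=> C /andP [_ /eqP ->].
rewrite sum_nat_const -cards_draws; congr (_ * _).
by apply: eq_card => C; rewrite !inE.
Qed.

Lemma sum_cond_mul (I : finType) (A : {set I}) (P : pred I) (G : I -> nat) :
  \sum_(t in A | P t) G t = \sum_(t in A) P t * G t.
Proof. by rewrite big_mkcondr; apply: eq_bigr => t _; case: (P t); rewrite ?mul1n ?mul0n. Qed.

Lemma mainB n : forall (k : 'I_n) (g : nat -> nat),
  2 * \sum_(t in B_set n | t.1 k && t.2 (k, k)) g (fstat t) = \sum_(t in B_set n) g (fstat t).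
Proof.
elim: n => [|n IH] k g; first by case: k.
rewrite sum_cond_mul !fiber_sum.
case: (unliftP ord_max k) => [k'|] -> /=.
- under eq_bigr => T HT do under eq_bigr => e He do rewrite Wl Gll.
  under eq_bigr => T HT do rewrite -big_distrr fiber_val /= (sum_subsets_card _ (fun x => g x.+1)).
  under [in RHS]eq_bigr => T HT do rewrite fiber_val /= (sum_subsets_card _ (fun x => g x.+1)).
  rewrite -sum_cond_mul.
  exact: (IH k' (fun m => 2 * \sum_(i < m.+1) 'C(m, i) * g i.+1)).
- under eq_bigr => T HT do under eq_bigr => e He do rewrite Wm Gmm andbA andbb.
  under eq_bigr => T HT do rewrite fiber_val1.
  rewrite big_distrr /=; apply: eq_bigr => T HT.
  by rewrite fiber_val.
Qed.

Lemma B_nonempty n : 0 < #|B_set n|.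
Proof.
apply/card_gt0P; exists ([ffun _ => false], [ffun _ => false]).
rewrite inE typeBE /c0 /c1 /c2 /c3 /= /in_diag.
apply/and4P; split; apply/forallP => r; rewrite ?ffunE //; apply/forallP => j; by rewrite !ffunE.
Qed.

Import GRing.Theory Num.Theory.

Theorem mainTheorem6 (n : nat) (k : 'I_n) :
  probB (west_diag1 k) = (1 / 2)%R.
Proof.
have H := mainB k (fun _ => 1).
rewrite !sum1_card in H.
have HE : west_diag1 k :&: B_set n = west_diag1 k.
  by apply/setIidPl/subsetP => t; rewrite !inE => /andP [-> _].
rewrite /probB HE.
have HBE : #|B_set n| = 2 * #|west_diag1 k|.
  rewrite -H; congr (_ * _); apply: eq_card => t; rewrite unfold_in /= inE /west_diag1 !inE; by [].
have HB := B_nonempty n; rewrite HBE muln_gt0 /= in HB.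
rewrite HBE natrM.
have HE0 : (#|west_diag1 k|%:R : rat) != 0%R by rewrite pnatr_eq0 -lt0n.
by rewrite invfM mulrA mulrAC mulfV.
Qed.
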